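(* Let $G$ be a trigraph and $\Gamma\subseteq\operatorname{Aut}(G)$ a group of automorphisms. For every vertex $v\in V(G)$, $\deg_{G/\Gamma}(v^\Gamma)\leq\deg_G(v)$. In particular, $\Delta(G/\Gamma)\leq\Delta(G)$.
   Context: A trigraph is a finite simple graph whose edges are each colored red or black. $\operatorname{Aut}(G)$ is the automorphism group of the underlying simple graph of $G$ (automorphisms need not preserve edge colors). For $v\in V(G)$, $v^\Gamma$ is the orbit of $v$ under $\Gamma$. For a partition $\mathcal{P}$ of $V(G)$, the quotient trigraph $G/\mathcal{P}$ has vertex set $\mathcal{P}$; two distinct parts $U,W$ are joined by a black edge if every pair $\{u,w\}$ with $u\in U,w\in W$ is a black edge of $G$, are non-adjacent if no such pair is an edge, and are joined by a red edge otherwise. $G/\Gamma$ denotes $G/\mathcal{P}$ for $\mathcal{P}$ the partition of $V(G)$ into $\Gamma$-orbits. Degrees count edges of both colors; $\Delta$ denotes maximum degree. *)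

(* Defs.v *)
From mathcomp Require Import all_boot all_fingroup.
Set Implicit Arguments. Unset Strict Implicit. Unset Printing Implicit Defensive.
Import GroupScope.

Record trigraph (T : finType) := Trigraph {
  black : rel T;
  red : rel T;
  black_sym : symmetric black;
  red_sym : symmetric red;
  black_irr : irreflexive black;
  red_irr : irreflexive red;
  black_red_disj : forall x y, ~~ (black x y && red x y)
}.

Section TG.
Variables (T : finType) (G : trigraph T).

Definition adj (x y : T) : bool := black G x y || red G x y.

Definition deg (v : T) : nat := #|[set w | adj v w]|.

Definition maxdeg : nat := \max_(v : T) deg v.

(* Aut(G): automorphisms of the underlying simple graph (colours ignored) *)
Definition AutT : {set {perm T}} :=
  [set g : {perm T} | [forall x, forall y, adj (g x) (g y) == adj x y]].

(* quotient trigraph G / P on the parts of P *)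
Definition qblack (U W : {set T}) : bool :=
  (U != W) && [forall u in U, forall w in W, black G u w].
Definition qnonadj (U W : {set T}) : bool :=
  [forall u in U, forall w in W, ~~ adj u w].
Definition qred (U W : {set T}) : bool :=
  (U != W) && ~~ qblack U W && ~~ qnonadj U W.

Definition qdeg (P : {set {set T}}) (U : {set T}) : nat :=
  #|[set W in P | qblack U W || qred U W]|.

Definition qmaxdeg (P : {set {set T}}) : nat := \max_(U in P) qdeg P U.

Definition vorbit (Gam : {group {perm T}}) (v : T) : {set T} := orbit 'P Gam v.

Definition orbitPart (Gam : {group {perm T}}) : {set {set T}} :=
  [set vorbit Gam v | v : T].

End TG.

(* Main.v *)
Require Import Defs.
From mathcomp Require Import all_boot all_fingroup.

Lemma qdeg_le (T : finType) (G : trigraph T) (Gam : {group {perm T}}) :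
  Gam \subset AutT G ->
  forall v : T, qdeg G (orbitPart Gam) (vorbit Gam v) <= deg G v.
Proof.
move=> sGA v; rewrite /qdeg /deg.
apply: leq_trans (leq_imset_card (vorbit Gam) _).
apply: subset_leq_card; apply/subsetP => W; rewrite inE => /andP [/imsetP [x _ ->{W}] Hq].
have [u [w [Hu Hw Huw]]] : exists u w, [/\ u \in vorbit Gam v, w \in vorbit Gam x & adj G u w].
  case/orP: Hq => [/andP [_ /forallP Hb] | /andP [_ Hn]].
  - have := Hb v; rewrite /vorbit orbit_refl /= => /forallP /(_ x).
    rewrite orbit_refl /= => Hvx; exists v, x; split; rewrite ?orbit_refl //.
    by rewrite /adj Hvx.
  - move: Hn; rewrite /qnonadj negb_forall => /existsP [u].
    rewrite negb_imply => /andP [Hu]; rewrite negb_forall => /existsP [w].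
    rewrite negb_imply negbK => /andP [Hw Huw].
    by exists u, w.
case/orbitP: Hu => g Hg /= Hgu; subst u.
have gA : g \in AutT G by apply: (subsetP sGA).
move: gA; rewrite inE => /forallP /(_ v) /forallP /(_ ((g^-1)%g w)).
rewrite permKV => /eqP Hadj.
apply/imsetP; exists ((g^-1)%g w).
  by rewrite inE -Hadj.
have -> : vorbit Gam x = vorbit Gam w.
  by apply/esym/orbit_eqP.
apply/esym/orbit_eqP.
have -> : ((g^-1)%g w) = aperm w (g^-1)%g by rewrite apermE.
by rewrite mem_orbit // groupV.
Qed.

Theorem mainTheorem13 (T : finType) (G : trigraph T) (Gam : {group {perm T}}) :
  Gam \subset AutT G ->
  (forall v : T, qdeg G (orbitPart Gam) (vorbit Gam v) <= deg G v) /\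
  qmaxdeg G (orbitPart Gam) <= maxdeg G.
Proof.
move=> sGA; split; first exact: (@qdeg_le T G Gam sGA).
apply/bigmax_leqP => U /imsetP [v _ ->].
have H1 := @qdeg_le T G Gam sGA v. apply: (leq_trans H1).
exact: (leq_bigmax (F := deg G)).
Qed.
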